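(* Let $e'$ be a fixed edge of $C_o:=\overline{C_{F_\mathsf{o}}}$ and let $L_{C_o},U_{C_o}$ be as defined in the context. For each integer $x\in[L_{C_o},U_{C_o}]$ there exists an edge $e^\star\in C_o$ with $\ell^{e^\star}_{C_o}(e')=x$ such that, if $e^\star$ is used as the reference edge, $e^\star$ belongs to a horizontal segment $S$ with $\mathcal{N}_\mathsf{north}(S)=\emptyset$.
   Context: Setting: $G$ is a biconnected simple plane graph of maximum degree at most $4$ with an ortho-radial representation (angles in $\{90^\circ,180^\circ,270^\circ\}$ at corners, a central face $F_\mathsf{c}$ and an outer face $F_\mathsf{o}$) satisfying (R1) angle sums at vertices are $360^\circ$ and (R2) rotation of the clockwise facial cycle $C_F$ is $4$ for regular faces, $0$ for a face that is exactly one of central/outer, $-4$ for a face that is both. Rotation of a length-2 path $(u,v,w)$ is $-1,0,1$ for left turn/straight/right turn ($\pm2$ for a $180^\circ$ turn), of a path the sum over its length-2 subpaths. A path is crossing-free if it repeats no undirected edge and does not cross itself at repeated vertices. For edges $e=(u,v)$, $f=(x,y)$ and a crossing-free reference path $P$ from $u$ or $v$ to $x$ or $y$ avoiding $e,\overline e,f,\overline f$: $\mathsf{direction}(e,P,f)$ is $\mathsf{rotation}(e\circ P\circ f)$ ($P$: $v\to x$), $\mathsf{rotation}(\overline e\circ P\circ f)+2$ ($u\to x$), $\mathsf{rotation}(e\circ P\circ\overline f)-2$ ($v\to y$), $\mathsf{rotation}(\overline e\circ P\circ\overline f)$ ($u\to y$). The interior of a cycle is the side with respect to which it is clockwise; a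 simple cycle $C$ with $F_\mathsf{o}$ in its exterior is essential if $F_\mathsf{c}$ is in its interior. For a choice of reference edge $e^\star$ on $C_o$, an essential cycle $C$ and $e\in C$, $\ell^{e^\star}_C(e)=\mathsf{direction}(e^\star,P,e)$ for any reference path $P$ in the exterior of $C$ (well defined), with $\ell^{e^\star}_{C_o}(e^\star)=0$. With reference edge $e^\star$, each edge points east/south/west/north according as $\mathsf{direction}(e^\star,P,e)\bmod4$ is $0,1,2,3$; horizontal segments are the connected components of the set of east edges, and $\mathcal{N}_\mathsf{north}(S)$ is the set of north edges $(a,b)$ with $a\in S$. For an essential cycle $C$, let $I_C=\{\ell^{e'}_C(e):e\in C\}$ (a set of consecutive integers). Define $L_C=1-\max I_C$ and $U_C=-1-\min I_C$ if $|I_C|\ge2$, and $L_C=U_C=-\min I_C$ if $|I_C|=1$. (Equivalently, with reference edge $e^\star$, $C$ has all labels $\ge0$ and some positive iff $\ell^{e^\star}_{C_o}(e')>U_C$, and all labels $\le0$ and some negative iff $\ell^{e^\star}_{C_o}(e')<L_C$.) *)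

(* Defs.v *)
From Stdlib Require Import Relation_Operators.
From HB Require Import structures.
From mathcomp Require Import all_boot all_order all_algebra all_fingroup.
Set Implicit Arguments. Unset Strict Implicit. Unset Printing Implicit Defensive.
Import Order.TTheory GRing.Theory Num.Theory.

(* Darts = directed edges.  [rev d] is the reverse dart, [rot d] is the next
   dart around [tail d] in counterclockwise order, [angle d] is the angle
   (in units of 90 degrees) between [d] and [rot d] at [tail d].
   A face is an orbit of [facenext]; the walk along [facenext] keeps the face
   on its right, i.e. it is the clockwise facial cycle C_F.
   [fcen] / [fout] are darts of the clockwise facial cycles of the central /
   outer face. *)
Record orgraph := ORGraph {
  vert : finType;
  dart : finType;
  tail : dart -> vert;
  rev : dart -> dart;
  rot : {perm dart};
  angle : dart -> nat;
  fcen : dart;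
  fout : dart
}.

Section Defs.
Variable G : orgraph.
Local Notation V := (vert G).
Local Notation D := (dart G).
Local Notation tl := (@tail G).
Local Notation rv := (@rev G).
Local Notation rt := (fun_of_perm (rot G)).

Definition head (d : D) : V := tl (rv d).

Definition facenext (d : D) : D := rt (rv d).

(* sum of the angles swept counterclockwise around a vertex from dart c to
   dart b (at least one step; a full turn, 360 deg, if b = c) *)
Definition angsum (c b : D) : nat :=
  (\sum_(i < (findex rt (rt c) b).+1) @angle G (iter i rt c))%N.

(* rotation of the length-2 path a, b (head a = tail b): the angle on the
   right of the path is angsum (rev a) b; rotation = 2 - (right angle) *)
Definition turn (a b : D) : int := (2%:Z - (angsum (rv a) b)%:Z)%R.

Fixpoint rotation (s : seq D) : int :=
  match s with
  | a :: ((b :: _) as s') => (turn a b + rotation s')%R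
  | _ => 0%R
  end.

Definition adj : rel V := [rel u w | [exists d, (tl d == u) && (head d == w)]].

Definition is_face_of (f d : D) : bool := fconnect facenext f d.

Definition face_rotation (f : D) : int :=
  (\sum_(x | is_face_of f x) turn x (facenext x))%R.

Definition nfaces : nat := #|[set d | froot facenext d == d]|.

Definition valid_orgraph : Prop :=
  (forall d, rv (rv d) = d) /\ (forall d, rv d != d) /\
  (forall d, tl (rt d) = tl d) /\
  (forall d d', tl d = tl d' -> fconnect rt d d') /\
  (forall d, tl d != head d) /\
  (forall d d', tl d = tl d' -> head d = head d' -> d = d') /\
  (forall v, #|[set d | tl d == v]| <= 4)%N /\
  (* biconnected: connected and without cut vertex *)
  (forall u w, connect adj u w) /\
  (forall x u w, u != x -> w != x ->
     connect [rel a b | adj a b && (b != x)] u w) /\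
  (* plane embedding: Euler's formula V - E + F = 2, with E = #|D|/2 *)
  (2 * #|V| + 2 * nfaces = #|D| + 4)%N /\
  (forall d, 1 <= @angle G d <= 3)%N /\
  (forall v, \sum_(d | tl d == v) @angle G d = 4)%N /\
  (forall f,
     face_rotation f =
       (if is_face_of (fcen G) f && is_face_of (fout G) f then (- 4)%R
        else if is_face_of (fcen G) f || is_face_of (fout G) f then 0%R
        else 4%R)).

(* a path is a start vertex v and a list of darts *)
Fixpoint walk_from (v : V) (s : seq D) : bool :=
  match s with
  | [::] => true
  | d :: s' => (tl d == v) && walk_from (head d) s'
  end.

Definition walk_end (v : V) (s : seq D) : V := last v (map head s).

Definition between (a b c : D) : bool :=
  (0 < findex rt a c < findex rt a b)%N.

Definition crossing (a1 b1 a2 b2 : D) : bool :=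
  between a1 b1 a2 != between a1 b1 b2.

Definition crossing_free (v : V) (s : seq D) : Prop :=
  walk_from v s /\
  (* no undirected edge repeated *)
  uniq (s ++ map rv s) /\
  (* no self-crossing at repeated (internal) vertices *)
  (forall i j, (i < j)%N -> (j.+1 < size s)%N ->
     head (nth (fout G) s i) = head (nth (fout G) s j) ->
     ~~ crossing (rv (nth (fout G) s i)) (nth (fout G) s i.+1)
                 (rv (nth (fout G) s j)) (nth (fout G) s j.+1)).

Definition refpath (e : D) (v : V) (P : seq D) (f : D) : Prop :=
  crossing_free v P /\
  (v = tl e \/ v = head e) /\
  (walk_end v P = tl f \/ walk_end v P = head f) /\
  all (fun d => d \notin [:: e; rv e; f; rv f]) P.

Definition direction (e : D) (v : V) (P : seq D) (f : D) : int :=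
  let t := walk_end v P in
  let a := if v == head e then e else rv e in
  let b := if t == tl f then f else rv f in
  (rotation (a :: P ++ [:: b])
   + (if v == head e then 0 else 2)%:Z
   - (if t == tl f then 0 else 2)%:Z)%R.

(* with reference edge estar, e points east/south/west/north for k=0/1/2/3 *)
Definition points (estar e : D) (k : nat) : Prop :=
  exists v P, refpath estar v P e /\ ((direction estar v P e) %% 4)%Z = (k%:Z)%R.

(* vertices of the horizontal segment containing estar (connected component
   of the set of east edges containing estar) *)
Definition east_step (estar : D) (a b : V) : Prop :=
  exists d, points estar d 0 /\
    ((tl d = a /\ head d = b) \/ (tl d = b /\ head d = a)).

Definition seg_vertex (estar : D) (v : V) : Prop :=
  clos_refl_trans V (east_step estar) (tl estar) v.

(* C_o is the reversal of C_{F_o}; successor of a dart on C_o *)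
Definition cosucc (d : D) : D := (rot G)^-1%g (rv d).

Definition onCo (d : D) : bool := fconnect cosucc (rv (fout G)) d.

(* ell^{estar}_{C_o}(e) = direction(estar, P, e) with P the arc of C_o from
   head estar to tail e (a crossing-free reference path in the exterior of
   C_o), i.e. rotation(estar o P o e); it is 0 for e = estar. *)
Definition lab (estar e : D) : int :=
  (\sum_(i < findex cosucc estar e) turn (iter i cosucc estar) (iter i.+1 cosucc estar))%R.

Definition Imax (e' : D) : int :=
  (\big[Num.max/lab e' e']_(e <- fingraph.orbit cosucc e') lab e' e)%R.
Definition Imin (e' : D) : int :=
  (\big[Num.min/lab e' e']_(e <- fingraph.orbit cosucc e') lab e' e)%R.

Definition LCo (e' : D) : int :=
  if Imax e' != Imin e' then (1 - Imax e')%R else (- Imin e')%R.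
Definition UCo (e' : D) : int :=
  if Imax e' != Imin e' then (-1 - Imin e')%R else (- Imin e')%R.

End Defs.

(* Main.v *)
Require Import Defs.
From HB Require Import structures.
From mathcomp Require Import all_boot all_order all_algebra all_fingroup.
From mathcomp Require Import zify ring.
From Stdlib Require Import Relation_Operators Operators_Properties.
Set Implicit Arguments. Unset Strict Implicit. Unset Printing Implicit Defensive.

Module CohomPart.
Import GRing.Theory.
Local Open Scope ring_scope.

Lemma F2_add_self (x : 'F_2) : x + x = 0.
Proof. case: x => [[|[|]]] //= Hx; apply/val_inj => //. Qed.
Lemma F2_cases (x : 'F_2) : x = 0 \/ x = 1.
Proof. case: x => [[|[|]]] //= Hx; [left|right]; apply/val_inj => //. Qed.
Lemma F2_addI (x y : 'F_2) : x + y = 0 -> x = y.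
Proof. by move=> H; rewrite -[y]add0r -H -addrA F2_add_self addr0. Qed.

Lemma sum_enum (T : finType) (R : nmodType) (g : T -> R) :
  \sum_(i < #|T|) g (enum_val i) = \sum_d g d.
Proof. rewrite -(big_enum_val (A := T)). apply: eq_bigl => x. by rewrite inE. Qed.

Lemma sum_pick (T : finType) (R : semiRingType) (g : T -> R) x :
  \sum_(i < #|T|) g (enum_val i) * (enum_val i == x)%:R = g x.
Proof.
rewrite (sum_enum (fun d => g d * (d == x)%:R)) (bigD1 x) //= eqxx mulr1 big1 ?addr0 // => d /negbTE ->.
by rewrite mulr0.
Qed.

Lemma sum_pickr (T : finType) (R : semiRingType) m (w : 'M[R]_(m, #|T|)) k x :
  \sum_(v < #|T|) w k v * (enum_val v == x)%:R = w k (enum_rank x).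
Proof.
rewrite (bigD1 (enum_rank x)) //= enum_rankK eqxx mulr1 big1 ?addr0 // => v hv.
case: eqP => [hx|]; last by rewrite mulr0.
by move: hv; rewrite -hx enum_valK eqxx.
Qed.

Lemma F2_two : (2%:R : 'F_2) = 0. Proof. by apply/val_inj. Qed.
Lemma par0n (m : nat) : ((m%:R : 'F_2) == 0) = (2 %| m)%N.
Proof.
rewrite {1}(divn_eq m 2) natrD natrM F2_two mulr0 add0r modn2 dvdn2.
by case: (odd m); rewrite ?oner_eq0 ?eqxx.
Qed.
Lemma par0 (z : int) : ((z%:~R : 'F_2) == 0) = (2 %| z)%Z.
Proof.
case: z => m.
  by rewrite -pmulrn par0n dvdzE.
by rewrite NegzE mulrNz oppr_eq0 -pmulrn par0n dvdzE abszN.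
Qed.
Lemma F2_opp (x : 'F_2) : - x = x.
Proof. by rewrite -[LHS]addr0 -(F2_add_self x) addrA addNr add0r. Qed.
Lemma intr_sumF2 (T : finType) (P : pred T) (w : T -> int) :
  ((\sum_(x | P x) w x)%:~R : 'F_2) = \sum_(x | P x) (w x)%:~R.
Proof. by rewrite (big_morph (fun z : int => (z%:~R : 'F_2)) (@intrD _) (mulr0z _)). Qed.
Lemma dvd4_2 (x : int) : (4 %| x * 2)%Z = (2 %| x)%Z.
Proof. by rewrite (_ : 4 = 2 * 2) // dvdz_mul2r. Qed.
Lemma dvd4_2l (x : int) : (4 %| x)%Z -> (2 %| x)%Z.
Proof. by apply: dvdz_trans; rewrite (_ : 4 = 2 * 2) // dvdz_mulr. Qed.

Section Cohom.
Variables (D V : finType) (tl hd : D -> V) (rv fr : D -> D).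
Hypothesis rvK : forall d, rv (rv d) = d.
Hypothesis rv_neq : forall d, rv d != d.
Hypothesis hd_def : forall d, hd d = tl (rv d).
Hypothesis frK : forall d, fr (fr d) = fr d.
Hypothesis conn_V : forall h : V -> 'F_2, (forall d, h (tl d) = h (hd d)) -> forall u w, h u = h w.
Hypothesis conn_D : forall x : D -> 'F_2, (forall d, x (rv d) = x d) ->
  (forall d d', fr d = fr d' -> x d = x d') -> forall d d', x d = x d'.
Hypothesis face_tel : forall (h : V -> 'F_2) f, \sum_(x | fr x == f) (h (tl x) + h (hd x)) = 0.
Hypothesis euler : (2 * #|V| + 2 * #|[set d | fr d == d]| = #|D| + 4)%N.

Local Notation n := #|D|.
Local Notation F := 'F_2.
Local Notation ev j := (enum_val (j : 'I_#|D|)).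

Definition Sm : 'M[F]_(n, n) := \matrix_(i, j) ((ev j == ev i)%:R + (ev j == rv (ev i))%:R).
Definition Bm : 'M[F]_(n, n) := \matrix_(i, j) (fr (ev j) == fr (ev i))%:R.
Definition Dm : 'M[F]_(#|V|, n) :=
  \matrix_(v, j) ((tl (ev j) == enum_val v)%:R + (hd (ev j) == enum_val v)%:R).
Definition vec (c : D -> F) : 'rV[F]_n := \row_j c (ev j).
Definition unvec (r : 'rV[F]_n) (d : D) : F := r 0 (enum_rank d).

Lemma unvecE (r : 'rV[F]_n) (j : 'I_n) : r 0 j = unvec r (ev j).
Proof. by rewrite /unvec enum_valK. Qed.

Lemma rowvP (r : 'rV[F]_n) : r = vec (unvec r).
Proof. by apply/rowP => j; rewrite mxE unvecE. Qed.

Lemma vecS_E c (i : 'I_n) : (vec c *m Sm^T) 0 i = c (ev i) + c (rv (ev i)).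
Proof.
rewrite mxE (eq_bigr (fun j : 'I_n => c (ev j) * (ev j == ev i)%:R + c (ev j) * (ev j == rv (ev i))%:R)); last first.
  by move=> j _; rewrite !mxE mulrDr.
by rewrite big_split /= !sum_pick.
Qed.

Lemma S_sym (c : D -> F) : vec c *m Sm^T = 0 -> forall d, c (rv d) = c d.
Proof.
move=> H d; have := congr1 (fun M : 'rV[F]_n => M 0 (enum_rank d)) H.
by rewrite vecS_E mxE enum_rankK => /F2_addI.
Qed.

Lemma eq_rv x y : (x == rv y) = (y == rv x).
Proof. by apply/eqP/eqP => ->; rewrite rvK. Qed.

Lemma kerS_sub (r : 'rV[F]_n) : r *m Sm^T = 0 -> (r <= Sm)%MS.
Proof.
rewrite [r]rowvP => H.
have sym := S_sym H.
set c := unvec r in sym *.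
pose ug d := if (enum_rank d < enum_rank (rv d))%N then c d else 0.
apply/submxP; exists (vec ug).
apply/rowP => j; rewrite !mxE.
rewrite (eq_bigr (fun i : 'I_n => ug (ev i) * (ev i == ev j)%:R + ug (ev i) * (ev i == rv (ev j))%:R)); last first.
  by move=> i _; rewrite !mxE mulrDr eq_sym eq_rv.
rewrite big_split /= !sum_pick /ug rvK.
set x := ev j.
have hne : (enum_rank x : nat) != enum_rank (rv x).
  by apply: contra (rv_neq x) => /eqP /ord_inj /enum_rank_inj Hx; rewrite -Hx.
case: ltngtP hne => //= _ _; first by rewrite addr0.
by rewrite add0r sym.
Qed.

Lemma rankS_ge : (n <= 2 * \rank Sm)%N.
Proof.
have sK : (kermx Sm^T <= Sm)%MS.
  apply/row_subP => i; apply: kerS_sub.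
  by rewrite -row_mul mulmx_ker row0.
have := mxrankS sK; rewrite mxrank_ker mxrank_tr. lia.
Qed.

Local Notation R := [set d | fr d == d].
Definition Bp : 'M[F]_(#|R|, n) := \matrix_(i, j) (fr (ev j) == enum_val i)%:R.

Lemma Bp_sub : (Bp <= Bm)%MS.
Proof.
apply/row_subP => i.
have Rr : fr (enum_val i) = enum_val i.
  by have := enum_valP i; rewrite inE => /eqP.
have -> : row i Bp = row (enum_rank (enum_val i)) Bm.
  by apply/rowP => j; rewrite !mxE enum_rankK Rr.
exact: row_sub.
Qed.

Lemma Bp_free : row_free Bp.
Proof.
rewrite -kermx_eq0; apply/eqP/row_matrixP => k; rewrite row0.
have Hx : row k (kermx Bp) *m Bp = 0 by rewrite -row_mul mulmx_ker row0.
move: (row k (kermx Bp)) Hx => x Hx.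
apply/rowP => i; rewrite mxE.
have Rr : fr (enum_val i) = enum_val i.
  by have := enum_valP i; rewrite inE => /eqP.
have := congr1 (fun M : 'rV[F]_n => M 0 (enum_rank (enum_val i))) Hx.
rewrite !mxE.
rewrite (eq_bigr (fun l => x 0 l * (l == i)%:R)); last first.
  by move=> l _; rewrite !mxE enum_rankK Rr (inj_eq (@enum_val_inj _ _)) eq_sym.
rewrite (bigD1 i) //= eqxx mulr1 big1 ?addr0 // => l /negbTE ->.
by rewrite mulr0.
Qed.

Lemma rankB_ge : (#|R| <= \rank Bm)%N.
Proof. by have := mxrankS Bp_sub; rewrite (eqP Bp_free). Qed.

Lemma mulS_E (u : 'rV[F]_n) (j : 'I_n) :
  (u *m Sm) 0 j = unvec u (ev j) + unvec u (rv (ev j)).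
Proof.
rewrite mxE (eq_bigr (fun i : 'I_n => unvec u (ev i) * (ev i == ev j)%:R + unvec u (ev i) * (ev i == rv (ev j))%:R)); last first.
  by move=> i _; rewrite !mxE mulrDr eq_sym eq_rv unvecE.
by rewrite big_split /= !sum_pick.
Qed.

Lemma mulB_E (u : 'rV[F]_n) (j : 'I_n) :
  (u *m Bm) 0 j = \sum_(d | fr d == fr (ev j)) unvec u d.
Proof.
rewrite mxE (eq_bigr (fun i : 'I_n => (fun d => if fr d == fr (ev j) then unvec u d else 0) (ev i))); last first.
  by move=> i _; rewrite !mxE unvecE eq_sym; case: eqP; rewrite ?mulr1 ?mulr0.
by rewrite (sum_enum (fun d => if fr d == fr (ev j) then unvec u d else 0)) [RHS]big_mkcond.
Qed.

Lemma cap_const : ((Sm :&: Bm)%MS <= (const_mx 1 : 'rV[F]_n))%MS.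
Proof.
apply/row_subP => i.
have xS : (row i (Sm :&: Bm)%MS <= Sm)%MS := submx_trans (row_sub i _) (capmxSl _ _).
have xB : (row i (Sm :&: Bm)%MS <= Bm)%MS := submx_trans (row_sub i _) (capmxSr _ _).
move: (row i (Sm :&: Bm)%MS) xS xB => x xS xB.
have symx : forall d, unvec x (rv d) = unvec x d.
  case/submxP: xS => u ->.
  move=> d; rewrite /unvec !mulS_E !enum_rankK rvK addrC //.
have facex : forall d d', fr d = fr d' -> unvec x d = unvec x d'.
  case/submxP: xB => u ->.
  by move=> d d' e; rewrite /unvec !mulB_E !enum_rankK e.
have cst := conn_D symx facex.
apply/sub_rVP.
case: (pickP (fun _ : D => true)) => [d0 _ | none].
  exists (unvec x d0); apply/rowP => j; rewrite !mxE mulr1 unvecE; exact: cst.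
exists 0; apply/rowP => j; by have := none (ev j).
Qed.

Definition Mm := col_mx Sm Bm.

Lemma vecM0 c : (forall d, c (rv d) = c d) -> (forall f, \sum_(x | fr x == f) c x = 0) ->
  vec c *m Mm^T = 0.
Proof.
move=> sym fs; rewrite /Mm tr_col_mx mul_mx_row.
have -> : vec c *m Sm^T = 0.
  by apply/rowP => i; rewrite vecS_E mxE sym F2_add_self.
have -> : vec c *m Bm^T = 0.
  apply/rowP => i; rewrite !mxE.
  rewrite (eq_bigr (fun j : 'I_n => (fun d => if fr d == fr (ev i) then c d else 0) (ev j))); last first.
    by move=> j _; rewrite !mxE; case: eqP; rewrite ?mulr1 ?mulr0.
  by rewrite (sum_enum (fun d => if fr d == fr (ev i) then c d else 0)) -big_mkcond fs.
exact: row_mx0.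
Qed.

Definition delta (v : V) (d : D) : F := (tl d == v)%:R + (hd d == v)%:R.

Lemma delta_sym v d : delta v (rv d) = delta v d.
Proof. by rewrite /delta hd_def rvK -hd_def addrC. Qed.

Lemma delta_face v f : \sum_(x | fr x == f) delta v x = 0.
Proof. exact: (face_tel (fun w => (w == v)%:R)). Qed.

Lemma Dm_sub : (Dm <= kermx Mm^T)%MS.
Proof.
apply/sub_kermxP; apply/row_matrixP => v; rewrite row_mul row0.
have -> : row v Dm = vec (delta (enum_val v)).
  by apply/rowP => j; rewrite !mxE.
apply: vecM0; [exact: delta_sym | exact: delta_face].
Qed.

Lemma kerD_const : (kermx Dm <= (const_mx 1 : 'rV[F]_#|V|))%MS.
Proof.
apply/row_subP => k.
have Hh : row k (kermx Dm) *m Dm = 0 by rewrite -row_mul mulmx_ker row0.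
move: (row k (kermx Dm)) Hh => h Hh.
pose hc w := h 0 (enum_rank w).
have e : forall d, hc (tl d) = hc (hd d).
  move=> d; have := congr1 (fun M : 'rV[F]_n => M 0 (enum_rank d)) Hh.
  rewrite !mxE.
  rewrite (eq_bigr (fun v => h 0 v * (enum_val v == tl d)%:R + h 0 v * (enum_val v == hd d)%:R)); last first.
    by move=> v _; rewrite !mxE enum_rankK mulrDr ![(_ == enum_val v)]eq_sym.
  by rewrite big_split /= !sum_pickr => /F2_addI.
have cst := conn_V e.
apply/sub_rVP.
case: (pickP (fun _ : V => true)) => [w0 _ | none].
  exists (hc w0); apply/rowP => j; rewrite !mxE mulr1.
  by rewrite -[j]enum_valK; exact: cst.
exists 0; apply/rowP => j; by have := none (enum_val j).
Qed.

Theorem cohom (c : D -> F) : (forall d, c (rv d) = c d) ->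
  (forall f, \sum_(x | fr x == f) c x = 0) ->
  exists h : V -> F, forall d, c d = h (tl d) + h (hd d).
Proof.
move=> sym fs.
have K1 : (vec c <= kermx Mm^T)%MS by apply/sub_kermxP; exact: vecM0.
have rK : \rank (kermx Mm^T) = (n - \rank Mm)%N by rewrite mxrank_ker mxrank_tr.
have rM : (\rank Mm + \rank (Sm :&: Bm)%MS = \rank Sm + \rank Bm)%N.
  by rewrite -(mxrank_sum_cap Sm Bm) (addsmxE Sm Bm).1.
have rC : (\rank (Sm :&: Bm)%MS <= 1)%N.
  exact: leq_trans (mxrankS cap_const) (rank_leq_row _).
have rD : (#|V| <= \rank Dm + 1)%N.
  have := leq_trans (mxrankS kerD_const) (rank_leq_row _).
  rewrite mxrank_ker; lia.
have rS := rankS_ge.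
have rB := rankB_ge.
have sub2 : (kermx Mm^T <= Dm)%MS.
  have [_ <-] := mxrank_leqif_sup Dm_sub.
  rewrite eqn_leq mxrankS ?Dm_sub //= rK.
  have t5 : (#|D| - \rank Mm <= \rank Dm)%N by lia.
  exact t5.
have /submxP [u hu] := submx_trans K1 sub2.
exists (fun w => u 0 (enum_rank w)) => d.
have := congr1 (fun M : 'rV[F]_n => M 0 (enum_rank d)) hu.
rewrite !mxE enum_rankK => ->.
rewrite (eq_bigr (fun v => u 0 v * (enum_val v == tl d)%:R + u 0 v * (enum_val v == hd d)%:R)); last first.
  by move=> v _; rewrite !mxE enum_rankK mulrDr ![(_ == enum_val v)]eq_sym.
by rewrite big_split /= !sum_pickr.
Qed.


Lemma cohom2 (w : D -> int) : (forall d, (2 %| w (rv d) + w d)%Z) ->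
  (forall f, (2 %| \sum_(x | fr x == f) w x)%Z) ->
  exists h : V -> int, forall d, (2 %| h (hd d) - h (tl d) - w d)%Z.
Proof.
move=> sym fs.
pose c d : F := (w d)%:~R.
have symc : forall d, c (rv d) = c d.
  move=> d; apply: F2_addI; apply/eqP; rewrite /c -intrD par0; exact: sym.
have fsc : forall f, \sum_(x | fr x == f) c x = 0.
  by move=> f; apply/eqP; rewrite /c -intr_sumF2 par0.
have [h Hh] := cohom symc fsc.
exists (fun v => Posz (h v : nat)) => d.
rewrite -par0 !intrB -!pmulrn !natr_Zp.
have := Hh d; rewrite /c => ->.
by rewrite F2_opp !F2_opp [h (tl d) + _]addrC F2_add_self.
Qed.

Hypothesis face_telZ : forall (h : V -> int) f, \sum_(x | fr x == f) (h (hd x) - h (tl x)) = 0.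

Lemma cohom4 (w : D -> int) : (forall d, (4 %| w (rv d) + w d)%Z) ->
  (forall f, (4 %| \sum_(x | fr x == f) w x)%Z) ->
  exists g : V -> int, forall d, (4 %| g (hd d) - g (tl d) - w d)%Z.
Proof.
move=> sym fs.
have [h Hh] := cohom2 (fun d => dvd4_2l (sym d)) (fun f => dvd4_2l (fs f)).
have [w1 Ew1] : exists w1 : D -> int, forall d, w1 d = w d - (h (hd d) - h (tl d)).
  by exists (fun d => w d - (h (hd d) - h (tl d))).
have e1 : forall d, (2 %| w1 d)%Z.
  move=> d; have -> : w1 d = - (h (hd d) - h (tl d) - w d) by rewrite Ew1; ring.
  by rewrite rpredN Hh.
have [w2 e2] : exists w2 : D -> int, forall d, w1 d = w2 d * 2.
  by exists (fun d => (w1 d %/ 2)%Z) => d; rewrite divzK.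
have sym2 : forall d, (2 %| w2 (rv d) + w2 d)%Z.
  move=> d; rewrite -dvd4_2 mulrDl -!e2 !Ew1 hd_def rvK -hd_def.
  have -> : w (rv d) - (h (tl d) - h (hd d)) + (w d - (h (hd d) - h (tl d))) = w (rv d) + w d by ring.
  exact: sym.
have fs2 : forall f, (2 %| \sum_(x | fr x == f) w2 x)%Z.
  move=> f; rewrite -dvd4_2 mulr_suml.
  rewrite (eq_bigr (fun x => w x - (h (hd x) - h (tl x)))); last by move=> x _; rewrite -e2 Ew1.
  rewrite sumrB face_telZ subr0; exact: fs.
have [h2 Hh2] := cohom2 sym2 fs2.
exists (fun v => h v + h2 v * 2) => d.
have -> : h (hd d) + h2 (hd d) * 2 - (h (tl d) + h2 (tl d) * 2) - w d =
   (h2 (hd d) - h2 (tl d) - w2 d) * 2.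
  have := e2 d; rewrite Ew1 => E.
  rewrite !mulrBl -E; ring.
by rewrite dvd4_2.
Qed.

End Cohom.

End CohomPart.
Import CohomPart.

Module GraphPart.
Import Order.TTheory GRing.Theory Num.Theory.
Local Open Scope ring_scope.

Lemma sum_shift_cyc (F : nat -> int) n : F n = F 0%N -> (\sum_(i < n) F i.+1 = \sum_(i < n) F i)%R.
Proof.
move=> e.
have h1 := @big_nat_recl _ 0%R +%R n 0 F (leq0n n).
have h2 := @big_nat_recr _ 0%R +%R n 0 F (leq0n n).
rewrite h2 e addrC in h1.
rewrite -(big_mkord xpredT (fun i => F i.+1)) -(big_mkord xpredT F).
apply: (addIr (F 0%N)); exact: esym h1.
Qed.

Lemma bigmax_ge (T : eqType) (s : seq T) (F : T -> int) x0 e :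
  e \in s -> (F e <= \big[Num.max/x0]_(e <- s) F e)%R.
Proof.
elim: s => // a s IH; rewrite inE big_cons => /orP [/eqP -> | /IH H].
  by rewrite Order.TotalTheory.le_max lexx.
by rewrite Order.TotalTheory.le_max H orbT.
Qed.

Lemma bigmax_x0 (T : eqType) (s : seq T) (F : T -> int) x0 :
  (x0 <= \big[Num.max/x0]_(e <- s) F e)%R.
Proof.
elim: s => [|a s IH]; first by rewrite big_nil.
by rewrite big_cons Order.TotalTheory.le_max IH orbT.
Qed.

Lemma bigmax_att (T : eqType) (s : seq T) (F : T -> int) x0 :
  \big[Num.max/x0]_(e <- s) F e = x0 \/ exists2 e, e \in s & \big[Num.max/x0]_(e <- s) F e = F e.
Proof.
elim: s => [|a s IH]; first by left; rewrite big_nil.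
rewrite big_cons Order.POrderTheory.maxEle; case: ifP => _.
  case: IH => [->|[e es ->]]; [by left | by right; exists e; rewrite // inE es orbT].
by right; exists a; rewrite ?inE ?eqxx.
Qed.

Lemma bigmin_le (T : eqType) (s : seq T) (F : T -> int) x0 e :
  e \in s -> (\big[Num.min/x0]_(e <- s) F e <= F e)%R.
Proof.
elim: s => // a s IH; rewrite inE big_cons => /orP [/eqP -> | /IH H].
  by rewrite Order.TotalTheory.ge_min lexx.
by rewrite Order.TotalTheory.ge_min H orbT.
Qed.

Lemma bigmin_x0 (T : eqType) (s : seq T) (F : T -> int) x0 :
  (\big[Num.min/x0]_(e <- s) F e <= x0)%R.
Proof.
elim: s => [|a s IH]; first by rewrite big_nil.
by rewrite big_cons Order.TotalTheory.ge_min IH orbT.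
Qed.

Lemma bigmin_att (T : eqType) (s : seq T) (F : T -> int) x0 :
  \big[Num.min/x0]_(e <- s) F e = x0 \/ exists2 e, e \in s & \big[Num.min/x0]_(e <- s) F e = F e.
Proof.
elim: s => [|a s IH]; first by left; rewrite big_nil.
rewrite big_cons Order.POrderTheory.minEle; case: ifP => _.
  by right; exists a; rewrite ?inE ?eqxx.
case: IH => [->|[e es ->]]; [by left | by right; exists e; rewrite // inE es orbT].
Qed.

Lemma ivt (f : nat -> int) a b y : (a < b)%N -> (forall k, -1 <= f k.+1 - f k <= 1)%R ->
  (f a <= y - 1)%R -> (y + 1 <= f b)%R ->
  exists i j, [/\ (a <= i)%N, (i.+1 < j)%N, (j <= b)%N, f i = (y - 1)%R & f j = (y + 1)%R]
            /\ forall t, (i < t < j)%N -> f t = y.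
Proof.
move=> ab st fa fb.
have exP : exists j, (a < j <= b)%N && (y + 1 <= f j)%R by exists b; rewrite ab leqnn fb.
case: (ex_minnP exP) => j /andP [/andP [aj jb] fj] minj.
have exQ : exists i, (a <= i < j)%N && (f i <= y - 1)%R by exists a; rewrite leqnn aj fa.
have ubQ : forall i, (a <= i < j)%N && (f i <= y - 1)%R -> (i <= j)%N.
  by move=> i /andP [/andP [_ /ltnW]].
case: (ex_maxnP exQ ubQ) => i /andP [/andP [ai ij] fi] maxi.
have mid : forall t, (i < t < j)%N -> f t = y.
  move=> t /andP [it tj].
  have h1 : ~~ (f t <= y - 1)%R.
    apply/negP => ft; have := maxi t; rewrite ft andbT (leq_trans ai (ltnW it)) tj /= => /(_ isT).
    by rewrite leqNgt it.
  have h2 : ~~ (y + 1 <= f t)%R.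
    apply/negP => ft; have := minj t; rewrite ft andbT (leq_trans (leq_ltn_trans ai it) (leqnn _)).
    rewrite (leq_trans (ltnW tj) jb) /= => /(_ isT); by rewrite leqNgt tj.
  move: h1 h2; rewrite -!real_ltNge ?num_real //; lia.
have sj := st j.-1; have si := st i.
have ij2 : (i.+1 < j)%N.
  rewrite ltn_neqAle ij andbT; apply/eqP => e; rewrite e in si; lia.
have ej : j.-1.+1 = j by lia.
rewrite ej in sj.
have fj1 : f j.-1 = y by apply: mid; lia.
have fi1 : f i.+1 = y by apply: mid; lia.
exists i, j; split => //; split; lia.
Qed.

Section Graph.
Variable G : orgraph.
Hypothesis HG : valid_orgraph G.
Local Notation D := (dart G).
Local Notation V := (vert G).
Local Notation tl := (@tail G).
Local Notation hd := (@Defs.head G).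
Local Notation rv := (@Defs.rev G).
Local Notation rt := (fun_of_perm (Defs.rot G)).
Local Notation fn := (@facenext G).
Local Notation ang := (@angle G).

Lemma rvK d : rv (rv d) = d. Proof. move: HG => [H _]; exact: H. Qed.
Lemma rv_neq d : rv d != d. Proof. move: HG => [_ [H _]]; exact: H. Qed.
Lemma tl_rot d : tl (rt d) = tl d. Proof. move: HG => [_ [_ [H _]]]; exact: H. Qed.
Lemma rot_conn d d' : tl d = tl d' -> fconnect rt d d'.
Proof. move: HG => [_ [_ [_ [H _]]]]; exact: H. Qed.
Lemma tl_neq_hd d : tl d != hd d. Proof. move: HG => [_ [_ [_ [_ [H _]]]]]; exact: H. Qed.
Lemma adj_conn u w : connect (@adj G) u w.
Proof. move: HG => [_ [_ [_ [_ [_ [_ [_ [H _]]]]]]]]; exact: H. Qed.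
Lemma euler_ax : (2 * #|V| + 2 * @nfaces G = #|D| + 4)%N.
Proof. move: HG => [_ [_ [_ [_ [_ [_ [_ [_ [_ [H _]]]]]]]]]]; exact: H. Qed.
Lemma ang_rng d : (1 <= ang d <= 3)%N.
Proof. move: HG => [_ [_ [_ [_ [_ [_ [_ [_ [_ [_ [H _]]]]]]]]]]]; exact: H. Qed.
Lemma R1 v : (\sum_(d | tl d == v) ang d = 4)%N.
Proof. move: HG => [_ [_ [_ [_ [_ [_ [_ [_ [_ [_ [_ [H _]]]]]]]]]]]]; exact: H. Qed.
Lemma R2 f : face_rotation f =
       (if is_face_of (fcen G) f && is_face_of (fout G) f then (- 4)%R
        else if is_face_of (fcen G) f || is_face_of (fout G) f then 0%R
        else 4%R).
Proof. move: HG => [_ [_ [_ [_ [_ [_ [_ [_ [_ [_ [_ [_ H]]]]]]]]]]]]; exact: H. Qed.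

Lemma hdE d : hd d = tl (rv d). Proof. by []. Qed.
Lemma hd_rv d : hd (rv d) = tl d. Proof. by rewrite hdE rvK. Qed.
Lemma rv_inj : injective rv. Proof. exact: can_inj rvK. Qed.
Lemma rt_inj : injective rt. Proof. exact: perm_inj. Qed.
Lemma fnE d : fn d = rt (rv d). Proof. by []. Qed.
Lemma fn_inj : injective fn.
Proof. by move=> x y; rewrite !fnE => /rt_inj /rv_inj. Qed.
Lemma tl_fn d : tl (fn d) = hd d. Proof. by rewrite fnE tl_rot. Qed.

Lemma fsym : connect_sym (coerced_frel fn).
Proof. move=> x y; exact: (fconnect_sym fn_inj). Qed.
Lemma rsym : connect_sym (coerced_frel rt).
Proof. move=> x y; exact: (fconnect_sym rt_inj). Qed.

Local Notation fr := (froot fn).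
Lemma frK d : fr (fr d) = fr d. Proof. exact: (root_root fsym d). Qed.
Lemma fr_fn d : fr (fn d) = fr d.
Proof. apply/eqP; rewrite eq_sym (root_connect fsym); exact: fconnect1. Qed.
Lemma fr_face x0 x : (fr x == fr x0) = is_face_of x0 x.
Proof. by rewrite eq_sym (root_connect fsym). Qed.

Lemma fconn_rt c d : fconnect rt c d = (tl d == tl c).
Proof.
apply/idP/idP => [H|/eqP H]; last by apply: rot_conn.
have inv : invariant rt tl =1 xpredT by move=> x; rewrite /invariant /= tl_rot eqxx.
by rewrite (fconnect_invariant inv H).
Qed.

Lemma face_tel_gen (R : zmodType) (h : V -> R) f :
  \sum_(x | fr x == f) (h (hd x) - h (tl x)) = 0.
Proof.
rewrite sumrB.
have -> : \sum_(x | fr x == f) h (tl x) = \sum_(x | fr x == f) h (hd x).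
  rewrite (reindex_inj fn_inj) /=; apply: eq_big => x; by rewrite ?fr_fn ?tl_fn.
by rewrite subrr.
Qed.

Lemma conn_V_gen (T : eqType) (h : V -> T) : (forall d, h (tl d) = h (hd d)) -> forall u w, h u = h w.
Proof.
move=> H u w.
have asym : connect_sym (@adj G).
  apply: sym_connect_sym => x y; apply/existsP/existsP => [[d /andP [/eqP <- /eqP <-]]|[d /andP [/eqP <- /eqP <-]]];
  by exists (rv d); rewrite hd_rv -hdE !eqxx.
have cl : closed (@adj G) [pred x | h x == h u].
  move=> x y /existsP [d /andP [/eqP <- /eqP <-]].
  by rewrite !inE H.
have := closed_connect cl (adj_conn u w); rewrite !inE eqxx => /esym /eqP.
by move=> ->.
Qed.

Lemma conn_D_gen (T : eqType) (x : D -> T) : (forall d, x (rv d) = x d) ->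
  (forall d d', fr d = fr d' -> x d = x d') -> forall d d', x d = x d'.
Proof.
move=> xs xf d d'.
have xr : forall e, x (rt e) = x e.
  move=> e; rewrite (_ : rt e = fn (rv e)); last by rewrite fnE rvK.
  by rewrite (xf _ (rv e) (fr_fn _)) xs.
have xc : forall e e', fconnect rt e e' -> x e = x e'.
  move=> e e'; apply: fconnect_invariant => y; by rewrite /invariant /= xr eqxx.
pose h (v : V) := if [pick e | tl e == v] is Some e then x e else x d.
have hE : forall e, h (tl e) = x e.
  move=> e; rewrite /h; case: pickP => [e1 /eqP H1|none]; last by have := none e; rewrite eqxx.
  apply: xc; exact: rot_conn.
have := @conn_V_gen _ h _ (tl d) (tl d').
rewrite !hE; apply => e; by rewrite hE hdE hE xs.
Qed.

Definition S (c : D) (j : nat) : nat := (\sum_(i < j) ang (iter i rt c))%N.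
Local Notation o c := (fingraph.order rt c).

Lemma S_add c j k : S c (j + k) = (S c j + S (iter j rt c) k)%N.
Proof.
rewrite /S big_split_ord /=; congr (_ + _)%N.
by apply: eq_bigr => i _; rewrite /= addnC iterD.
Qed.

Lemma sum_traject (F : D -> nat) c n :
  (\sum_(d <- traject rt c n) F d = \sum_(i < n) F (iter i rt c))%N.
Proof.
rewrite (big_nth c) size_traject big_mkord.
by apply: eq_bigr => i _; rewrite nth_traject.
Qed.

Lemma S_orbit c : S c (o c) = 4%N.
Proof.
rewrite /S -sum_traject -/(fingraph.orbit rt c) big_uniq ?fingraph.orbit_uniq //.
rewrite -(R1 (tl c)); apply: eq_bigl => d.
by rewrite -fconnect_orbit fconn_rt.
Qed.

Lemma order_ge2 c : (2 <= o c)%N.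
Proof.
have := S_orbit c; have := fingraph.order_gt0 rt c.
case: (o c) => [|[|k]] //= _.
rewrite /S big_ord1 /= => e; have := ang_rng c; rewrite e. by [].
Qed.

Lemma iter_o c : iter (o c) rt c = c.
Proof. exact: iter_order rt_inj c. Qed.

Lemma S_period c q r : S c (q * o c + r) = (4 * q + S c r)%N.
Proof.
elim: q => [|q IH]; first by rewrite mul0n add0n muln0.
by rewrite mulSn -addnA S_add S_orbit iter_o IH; lia.
Qed.

Lemma iter_period c q r : iter (q * o c + r) rt c = iter r rt c.
Proof.
elim: q => [|q IH]; first by rewrite mul0n add0n.
by rewrite mulSn -addnA addnC iterD iter_o IH.
Qed.

Lemma Smod c j : (S c j %% 4 = S c (findex rt c (iter j rt c)) %% 4)%N.
Proof.
rewrite {1 2}(divn_eq j (o c)) S_period iter_period findex_iter ?ltn_pmod ?fingraph.order_gt0 //.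
by rewrite mulnC modnMDl.
Qed.

Lemma S_ge c j : (j <= S c j)%N.
Proof.
rewrite /S -[X in (X <= _)%N](card_ord j) -sum1_card.
apply: leq_sum => i _; by case/andP: (ang_rng (iter i rt c)).
Qed.

Lemma S_le3 c j : (0 < j < fingraph.order rt c)%N -> (S c j <= 3)%N.
Proof.
case/andP => j0 jo.
have := S_orbit c; rewrite -(subnKC (ltnW jo)) S_add => e.
have := S_ge (iter j rt c) (fingraph.order rt c - j); lia.
Qed.

Lemma S_1 c : S c 1 = ang c.
Proof. by rewrite /S big_ord1. Qed.

Lemma S_ge2 c j : (2 <= j)%N -> (ang c + 1 <= S c j)%N.
Proof.
move=> j2; rewrite -(subnKC (ltnW j2)) S_add S_1.
have := S_ge (iter 1 rt c) (j - 1); lia.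
Qed.

Definition rt0 d := odflt d [pick e | tl e == tl d].
Lemma rt0_tl d : tl (rt0 d) = tl d.
Proof. by rewrite /rt0; case: pickP => [e /eqP|]. Qed.
Lemma rt0_eq d d' : tl d = tl d' -> rt0 d = rt0 d'.
Proof.
move=> e; rewrite /rt0 e; case: pickP => [//|none].
by have := none d'; rewrite eqxx.
Qed.

Definition theta d := S (rt0 d) (findex rt (rt0 d) d).

Lemma theta_rel z n : tl z = tl n -> ((theta z + S z (findex rt z n)) %% 4 = theta n %% 4)%N.
Proof.
move=> e.
have rn : rt0 n = rt0 z by apply: rt0_eq.
have cz : fconnect rt (rt0 z) z by rewrite fconn_rt rt0_tl.
have czn : fconnect rt z n by rewrite fconn_rt e.
rewrite /theta rn.
set m := findex rt (rt0 z) z.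
have iz : iter m rt (rt0 z) = z := iter_findex cz.
rewrite -{2}iz -S_add Smod addnC iterD iz iter_findex //.
Qed.

Lemma angsum_rel c b : tl c = tl b -> ((theta c + angsum c b) %% 4 = theta b %% 4)%N.
Proof.
move=> e.
rewrite /angsum.
set k := findex rt (rt c) b.
change (\sum_(i < k.+1) ang (iter i rt c))%N with (S c k.+1).
have ib : iter k.+1 rt c = b.
  by rewrite iterSr iter_findex // fconn_rt tl_rot e.
by rewrite -modnDmr Smod ib modnDmr theta_rel.
Qed.

Lemma mod4 (m n : nat) : (m %% 4 = n %% 4)%N -> (4 %| m%:Z - n%:Z)%Z.
Proof. by move=> H; rewrite -eqz_mod_dvd; apply/eqP; rewrite !modz_nat H. Qed.

Definition th d : int := (theta d)%:Z.

Lemma turn_rel a b : hd a = tl b -> (4 %| turn a b - (2 + th (rv a) - th b))%Z.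
Proof.
move=> e.
have := mod4 (angsum_rel (c := rv a) (b := b) _); rewrite -hdE e => /(_ erefl) H.
have -> : turn a b - (2 + th (rv a) - th b) = - ((theta (rv a) + angsum (rv a) b)%N%:Z - (theta b)%:Z).
  by rewrite /turn /th PoszD; ring.
by rewrite rpredN.
Qed.

Definition wgt d : int := 2 + th (rv d) - th d.

Lemma wgt_sym d : (4 %| wgt (rv d) + wgt d)%Z.
Proof. by rewrite /wgt rvK (_ : 2 + th d - th (rv d) + (2 + th (rv d) - th d) = 4) //; ring. Qed.

Lemma face_rot_dvd (f : D) : (4 %| face_rotation f)%Z.
Proof. by rewrite R2; case: ifP => _ //; case: ifP. Qed.

Lemma wgt_face f : (4 %| \sum_(x | fr x == f) wgt x)%Z.
Proof.
case: (pickP (fun x => fr x == f)) => [x0 /eqP <- | none]; last first.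
  by rewrite big_pred0.
rewrite (eq_bigl (fun x => is_face_of x0 x)); last by move=> x; rewrite fr_face.
have e : \sum_(x | is_face_of x0 x) (th (fn x) - th x) = 0.
  rewrite sumrB.
  have -> : \sum_(x | is_face_of x0 x) th (fn x) = \sum_(x | is_face_of x0 x) th x.
    rewrite [RHS](reindex_inj fn_inj) /=; apply: eq_bigl => x.
    by rewrite /is_face_of -(same_fconnect1_r fn_inj).
  by rewrite subrr.
rewrite (eq_bigr (fun x => turn x (fn x) - (turn x (fn x) - (2 + th (rv x) - th (fn x))) + (th (fn x) - th x))); last by move=> x _; rewrite /wgt; ring.
rewrite big_split sumrB /= e addr0.
apply: rpredB; first exact: face_rot_dvd.
apply: rpred_sum => x _; apply: turn_rel; by rewrite tl_fn.
Qed.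

Lemma exists_g : exists g : V -> int, forall d, (4 %| g (hd d) - g (tl d) - wgt d)%Z.
Proof.
apply: (@cohom4 D V tl hd rv fr rvK rv_neq hdE).
- exact: conn_V_gen.
- exact: conn_D_gen.
- move=> h f; rewrite (eq_bigr (fun x => h (hd x) - h (tl x))); first exact: face_tel_gen.
  by move=> x _; rewrite F2_opp addrC.
- exact: euler_ax.
- move=> h f; exact: face_tel_gen.
- exact: wgt_sym.
- exact: wgt_face.
Qed.

Lemma points_self (e : D) : points e e 0.
Proof.
exists (hd e), [::]; split.
  split; first by split; [done | split; [done | move=> i j _ //]].
  split; first by right.
  by split; first by right.
have ne : (hd e == tl e) = false by apply/negbTE; rewrite eq_sym tl_neq_hd.
rewrite /direction /walk_end /= eqxx ne /=.
have := mod4 (angsum_rel (c := rv e) (b := rv e) erefl).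
rewrite PoszD => H.
have -> : turn e (rv e) + 0 + 0 - 2 = - (angsum (rv e) (rv e))%:Z by rewrite /turn; ring.
apply/dvdz_mod0P; rewrite rpredN.
by rewrite (_ : _%:Z = (theta (rv e))%:Z + (angsum (rv e) (rv e))%:Z - (theta (rv e))%:Z) //; ring.
Qed.

Local Notation cs := (@cosucc G).

Lemma rt_cs d : rt (cs d) = rv d. Proof. by rewrite /cosucc permKV. Qed.
Lemma tl_cs d : tl (cs d) = hd d. Proof. by rewrite -tl_rot rt_cs. Qed.
Lemma cs_inj : injective cs.
Proof. by move=> x y e; apply: rv_inj; rewrite -!rt_cs e. Qed.
Lemma csym : connect_sym (coerced_frel cs).
Proof. move=> x y; exact: (fconnect_sym cs_inj). Qed.

Lemma order_rt z : fingraph.order rt (rt z) = fingraph.order rt z.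
Proof. by apply/esym/eq_card => x; apply: (same_fconnect1 rt_inj z x). Qed.

Lemma angsum_rt_z z : (angsum (rt z) z + ang z = 4)%N.
Proof.
set o := fingraph.order rt z.
have o2 := order_ge2 z.
have e1 : iter (o - 2) rt (rt (rt z)) = z.
  by rewrite -!iterSr (_ : (o - 2).+2 = o)%N ?iter_o //; rewrite /o; lia.
have e2 : findex rt (rt (rt z)) z = (o - 2)%N.
  rewrite -[X in findex _ _ X]e1 findex_iter // !order_rt -/o; lia.
rewrite /angsum e2.
change (\sum_(i < (o - 2).+1) ang (iter i rt (rt z)))%N with (S (rt z) (o - 2).+1).
have e3 : S z (1 + (o - 2).+1) = 4%N.
  by rewrite (_ : (1 + (o - 2).+1 = o)%N) ?S_orbit //; lia.
by rewrite S_add S_1 /= in e3; lia.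
Qed.

Lemma turn_cs d : turn d (cs d) = (ang (cs d))%:Z - 2.
Proof.
have := angsum_rt_z (cs d); rewrite rt_cs => e.
rewrite /turn; lia.
Qed.

Lemma angsum_rt c : angsum c (rt c) = ang c.
Proof. by rewrite /angsum findex0 big_ord1. Qed.

Lemma turn_fn x : turn x (fn x) = 2 - (ang (rv x))%:Z.
Proof. by rewrite /turn fnE angsum_rt. Qed.

Lemma fn_cs d : fn (rv (cs d)) = rv d.
Proof. by rewrite fnE rvK rt_cs. Qed.
Lemma cs_fn y : cs (rv (fn y)) = rv y.
Proof. by rewrite /cosucc rvK fnE permK. Qed.
Lemma iter_cs_fn k y : iter k cs (rv (iter k fn y)) = rv y.
Proof. by elim: k y => // k IH y; rewrite iterSr iterS cs_fn IH. Qed.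
Lemma iter_fn_cs k d : iter k fn (rv (iter k cs d)) = rv d.
Proof. by elim: k d => // k IH d; rewrite iterSr iterS fn_cs IH. Qed.

Lemma onCo_face d : onCo d = is_face_of (fout G) (rv d).
Proof.
rewrite /onCo /is_face_of; apply/idP/idP => H.
  have := iter_fn_cs (findex cs (rv (fout G)) d) (rv (fout G)).
  rewrite iter_findex // rvK => e.
  by rewrite fsym -e fconnect_iter.
rewrite fsym in H.
have := iter_cs_fn (findex fn (rv d) (fout G)) (rv d).
rewrite iter_findex // rvK => e.
by rewrite -e fconnect_iter.
Qed.

Lemma sum_orbit_cs (F : D -> int) e :
  \sum_(i < fingraph.order cs e) F (iter i cs e) = \sum_(d | fconnect cs e d) F d.
Proof.
have : \sum_(d <- traject cs e (fingraph.order cs e)) F d = \sum_(i < fingraph.order cs e) F (iter i cs e).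
  rewrite (big_nth e) size_traject big_mkord.
  by apply: eq_bigr => i _; rewrite nth_traject.
move=> <-; rewrite -/(fingraph.orbit cs e) big_uniq ?fingraph.orbit_uniq //.
by apply: eq_bigl => d; rewrite -fconnect_orbit.
Qed.

Definition LS d m : int := \sum_(i < m) turn (iter i cs d) (iter i.+1 cs d).

Lemma LS_add d j k : LS d (j + k) = LS d j + LS (iter j cs d) k.
Proof.
rewrite /LS big_split_ord /=; congr (_ + _).
by apply: eq_bigr => i _; rewrite /= -!iterD addnC.
Qed.

Lemma LS0 d : LS d 0 = 0. Proof. by rewrite /LS big_ord0. Qed.

Lemma LS_step d k : LS d k.+1 - LS d k = (ang (iter k.+1 cs d))%:Z - 2.
Proof. by rewrite /LS big_ord_recr /= addrAC subrr add0r turn_cs. Qed.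

Lemma iter_cs_o d : iter (fingraph.order cs d) cs d = d.
Proof. exact: iter_order cs_inj d. Qed.

Lemma order_cs_eq x y : fconnect cs x y -> fingraph.order cs x = fingraph.order cs y.
Proof. by move=> H; apply: eq_card => z; apply: (same_connect csym H). Qed.

Lemma LS_total d : onCo d -> ~~ is_face_of (fout G) (fcen G) ->
  LS d (fingraph.order cs d) = 0.
Proof.
move=> hco hcf.
set n := fingraph.order cs d.
have -> : LS d n = \sum_(i < n) ((ang (iter i cs d))%:Z - 2).
  rewrite /LS -(sum_shift_cyc (F := fun i => (ang (iter i cs d))%:Z - 2)) /=; last by rewrite iter_cs_o.
  by apply: eq_bigr => i _; rewrite turn_cs.
rewrite /n (sum_orbit_cs (fun x => (ang x)%:Z - 2)).
rewrite (eq_bigl (fun x => onCo x)); last by move=> x; rewrite /onCo (same_connect csym hco).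
rewrite (reindex_inj rv_inj) /=.
rewrite (eq_bigl (fun x => is_face_of (fout G) x)); last by move=> x; rewrite onCo_face rvK.
have e : \sum_(x | is_face_of (fout G) x) turn x (fn x) = 0.
  have := R2 (fout G); rewrite /face_rotation.
  have f1 : is_face_of (fout G) (fout G) := connect0 _ _.
  have f2 : is_face_of (fcen G) (fout G) = false by rewrite /is_face_of fsym; exact/negbTE.
  by rewrite f1 f2.
rewrite (_ : \sum_(x | is_face_of (fout G) x) ((ang (rv x))%:Z - 2) = - \sum_(x | is_face_of (fout G) x) turn x (fn x)).
  by rewrite e oppr0.
rewrite -sumrN; apply: eq_bigr => x _; by rewrite turn_fn opprB.
Qed.

Section Labels.
Variable e0 : D.
Hypothesis hco : onCo e0.
Hypothesis hcf : ~~ is_face_of (fout G) (fcen G).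
Local Notation n := (fingraph.order cs e0).

Lemma n_gt0 : (0 < n)%N. Proof. exact: fingraph.order_gt0. Qed.

Lemma iter_cs_period q r : iter (q * n + r) cs e0 = iter r cs e0.
Proof.
elim: q => [|q IH]; first by rewrite mul0n add0n.
by rewrite mulSn -addnA addnC iterD iter_cs_o IH.
Qed.

Lemma LS_period q r : LS e0 (q * n + r) = LS e0 r.
Proof.
elim: q => [|q IH]; first by rewrite mul0n add0n.
by rewrite mulSn -addnA LS_add LS_total // add0r iter_cs_o IH.
Qed.

Lemma LS_mod k : LS e0 k = LS e0 (k %% n).
Proof. by rewrite {1}(divn_eq k n) LS_period. Qed.

Lemma iter_mod k : iter k cs e0 = iter (k %% n) cs e0.
Proof. by rewrite {1}(divn_eq k n) iter_cs_period. Qed.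

Lemma lab_c k : lab (iter k cs e0) e0 = - LS e0 k.
Proof.
rewrite iter_mod LS_mod.
have rn : (k %% n < n)%N by rewrite ltn_pmod ?n_gt0.
move: rn; set r := (k %% n)%N => rn.
case: (posnP r) => [->|r0].
  by rewrite /= /lab findex0 big_ord0 LS0 oppr0.
set c := iter r cs e0.
have con : fconnect cs e0 c by apply: fconnect_iter.
have oc : fingraph.order cs c = n by rewrite (order_cs_eq con).
have ic : iter (n - r) cs c = e0 by rewrite /c -iterD subnK ?iter_cs_o // ltnW.
have fc : findex cs c e0 = (n - r)%N.
  by rewrite -[X in findex _ _ X]ic findex_iter // oc; lia.
have := LS_add e0 r (n - r); rewrite subnKC ?(ltnW rn) // LS_total // -/c.
rewrite /lab fc -/(LS c (n - r)) => e.
by apply/eqP; rewrite -addr_eq0 addrC -e.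
Qed.

Lemma lab_iter r : (r < n)%N -> lab e0 (iter r cs e0) = LS e0 r.
Proof. by move=> rn; rewrite /lab findex_iter. Qed.

Lemma Imax_ge k : LS e0 k <= Imax e0.
Proof.
rewrite LS_mod -lab_iter ?ltn_pmod ?n_gt0 //.
apply: bigmax_ge; rewrite -fconnect_orbit; exact: fconnect_iter.
Qed.

Lemma Imin_le k : Imin e0 <= LS e0 k.
Proof.
rewrite LS_mod -lab_iter ?ltn_pmod ?n_gt0 //.
apply: bigmin_le; rewrite -fconnect_orbit; exact: fconnect_iter.
Qed.

Lemma Imax_att : exists2 k, (k < n)%N & LS e0 k = Imax e0.
Proof.
case: (bigmax_att (fingraph.orbit cs e0) (lab e0) (lab e0 e0)) => [e|[e ee e']].
  by exists 0%N; rewrite ?n_gt0 // /Imax e /lab findex0 big_ord0 LS0.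
exists (findex cs e0 e); first by apply: findex_max; rewrite fconnect_orbit.
by rewrite /Imax e'.
Qed.

Lemma Imin_att : exists2 k, (k < n)%N & LS e0 k = Imin e0.
Proof.
case: (bigmin_att (fingraph.orbit cs e0) (lab e0) (lab e0 e0)) => [e|[e ee e']].
  by exists 0%N; rewrite ?n_gt0 // /Imin e /lab findex0 big_ord0 LS0.
exists (findex cs e0 e); first by apply: findex_max; rewrite fconnect_orbit.
by rewrite /Imin e'.
Qed.

Lemma onCo_iter k : onCo (iter k cs e0).
Proof. exact: connect_trans hco (fconnect_iter _ _ _). Qed.

End Labels.

Section Phi.
Variable g : V -> int.
Hypothesis Hg : forall d, (4 %| g (hd d) - g (tl d) - wgt d)%Z.

Definition phi d := g (tl d) - th d.

Lemma phi_turn a b : hd a = tl b -> (4 %| turn a b - (phi b - phi a))%Z.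
Proof.
move=> e.
have -> : turn a b - (phi b - phi a) = (turn a b - (2 + th (rv a) - th b)) - (g (hd a) - g (tl a) - wgt a).
  by rewrite /phi /wgt e; ring.
by apply: rpredB; [exact: turn_rel | exact: Hg].
Qed.

Lemma phi_rev d : (4 %| phi (rv d) - phi d - 2)%Z.
Proof.
have -> : phi (rv d) - phi d - 2 = g (hd d) - g (tl d) - wgt d.
  by rewrite /phi /wgt -hdE; ring.
exact: Hg.
Qed.

Fixpoint chain (s : seq D) : bool :=
  match s with
  | x :: ((y :: _) as s') => (hd x == tl y) && chain s'
  | _ => true
  end.

Lemma rot_phi x s : chain (x :: s) -> (4 %| rotation (x :: s) - (phi (last x s) - phi x))%Z.
Proof.
elim: s x => [|y s IH] x /=; first by rewrite subrr.
case/andP => /eqP e ch.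
have -> : turn x y + rotation (y :: s) - (phi (last y s) - phi x) =
   (turn x y - (phi y - phi x)) + (rotation (y :: s) - (phi (last y s) - phi y)) by ring.
by apply: rpredD; [exact: phi_turn | exact: IH].
Qed.

Lemma chain_walk a v P b : hd a = v -> walk_from v P -> tl b = walk_end v P ->
  chain (a :: P ++ [:: b]).
Proof.
elim: P a v => [|x P IH] a v /= ha.
  by rewrite /walk_end /= => _ ->; rewrite ha eqxx.
case/andP => /eqP tx wf hb.
rewrite ha tx eqxx /=.
apply: (IH x (hd x)) => //.
Qed.

Lemma dir_phi e v P f : refpath e v P f -> (4 %| direction e v P f - (phi f - phi e))%Z.
Proof.
case=> [[wf _] [hv [ht _]]].
rewrite /direction.
set t := walk_end v P.
set a := if v == hd e then e else rv e.
set b := if t == tl f then f else rv f.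
have ha : hd a = v.
  rewrite /a; case: eqP => [->//|ne]; case: hv ne => [->|->] // _; by rewrite hd_rv.
have hb : tl b = t.
  have ht' : t = tl f \/ t = hd f by [].
  rewrite /b; case: eqP => [->//|ne]; case: ht' ne => [->|->] // _.
have H := rot_phi (chain_walk ha wf hb).
rewrite last_cat /= in H.
have Ha : (4 %| phi a - phi e - (if v == hd e then 0 else 2)%N%:Z)%Z.
  rewrite /a; case: eqP => _; [by rewrite subrr | exact: phi_rev].
have Hb : (4 %| phi b - phi f - (if t == tl f then 0 else 2)%N%:Z)%Z.
  rewrite /b; case: eqP => _; [by rewrite subrr | exact: phi_rev].
set ca := (if v == hd e then 0 else 2)%N%:Z in Ha *.
set cb := (if t == tl f then 0 else 2)%N%:Z in Hb *.
have -> : rotation (a :: P ++ [:: b]) + ca - cb - (phi f - phi e) =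
  (rotation (a :: P ++ [:: b]) - (phi b - phi a)) + (phi b - phi f - cb) - (phi a - phi e - ca) by ring.
by apply: rpredB; [apply: rpredD|].
Qed.

Lemma points_phi estar n k : points estar n k -> (4 %| phi n - phi estar - k%:Z)%Z.
Proof.
case=> v [P [rp hk]].
have H := dir_phi rp.
have E := divz_eq (direction estar v P n) 4.
rewrite hk in E.
have -> : phi n - phi estar - k%:Z =
   - (direction estar v P n - (phi n - phi estar)) + (direction estar v P n %/ 4)%Z * 4.
  by rewrite {1}E; ring.
by apply: rpredD; [rewrite rpredN | apply: dvdz_mull].
Qed.

Definition md (x : int) := (x %% 4)%Z.

Lemma md_dvd x c : (4 %| x + c)%Z -> md x = md (- c).
Proof. by move=> H; apply/eqP; rewrite eqz_mod_dvd opprK. Qed.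

Lemma mdD x y : md (x + y) = md (md x + md y).
Proof. by rewrite /md modzDm. Qed.

Lemma phi_local z n : tl z = tl n -> (4 %| phi n - phi z + (S z (findex rt z n))%:Z)%Z.
Proof.
move=> e; have := mod4 (theta_rel e).
have -> : phi n - phi z + (S z (findex rt z n))%:Z =
  (theta z + S z (findex rt z n))%N%:Z - (theta n)%:Z by rewrite /phi /th e PoszD; ring.
by [].
Qed.

Lemma local3 z n : ang z = 3%N -> tl n = tl z ->
  n = z \/ (n = rt z /\ md (phi n - phi z) = 1).
Proof.
move=> az e.
have cz : fconnect rt z n by rewrite fconn_rt e.
have H := phi_local (esym e).
have jlt := findex_max cz.
have ij := iter_findex cz.
move: H jlt ij; set j := findex rt z n.
case: j => [|[|j]] H jlt ij.
- by left.
- right; split; first by rewrite -ij.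
  by rewrite (md_dvd H) S_1 az.
- exfalso; have := @S_le3 z j.+2; rewrite jlt => /(_ isT).
  have := @S_ge2 z j.+2 isT; lia.
Qed.

Lemma local2 z n : ang z = 2%N -> tl n = tl z ->
  n = z \/ (n = rt z /\ md (phi n - phi z) = 2) \/ md (phi n - phi z) = 1.
Proof.
move=> az e.
have cz : fconnect rt z n by rewrite fconn_rt e.
have H := phi_local (esym e).
have jlt := findex_max cz.
have ij := iter_findex cz.
move: H jlt ij; set j := findex rt z n.
case: j => [|[|j]] H jlt ij.
- by left.
- right; left; split; first by rewrite -ij.
  by rewrite (md_dvd H) S_1 az.
- right; right; rewrite (md_dvd H).
  have := @S_le3 z j.+2; rewrite jlt => /(_ isT).
  have := @S_ge2 z j.+2 isT; rewrite az => h1 h2.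
  by have -> : S z j.+2 = 3%N by lia.
Qed.

Lemma points_md estar d k : (k < 4)%N -> points estar d k -> md (phi d - phi estar) = k%:Z.
Proof.
move=> k4 /points_phi H.
rewrite (md_dvd H) opprK /md modz_nat modn_small //.
Qed.

Lemma md_split d z e : md (phi d - phi e) = md (md (phi d - phi z) + md (phi z - phi e)).
Proof. by rewrite -mdD; congr md; ring. Qed.

Lemma md_rev d e : md (phi (rv d) - phi e) = md (md (phi d - phi e) + 2).
Proof.
have h1 : md (phi (rv d) - phi d) = 2.
  have H : (4 %| (phi (rv d) - phi d) + - 2)%Z by exact: phi_rev.
  by rewrite (md_dvd H).
by rewrite (md_split (rv d) d e) h1 addrC.
Qed.

Lemma seg_lemma estar (RV : pred V) :
  RV (tl estar) ->
  (forall a, RV a -> exists z, tl z = a /\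
    ((ang z = 3%N /\ md (phi z - phi estar) = 0 /\ RV (hd z)) \/
     (ang z = 2%N /\ md (phi z - phi estar) = 0 /\ RV (hd z) /\ RV (hd (rt z))) \/
     (ang z = 3%N /\ md (phi z - phi estar) = 1 /\ RV (hd (rt z))))) ->
  forall n, points estar n 3 -> ~ seg_vertex estar (tl n).
Proof.
move=> R0 Hloc.
have claim : forall d, RV (tl d) -> md (phi d - phi estar) != 3 /\
    ((md (phi d - phi estar) == 0) || (md (phi d - phi estar) == 2) -> RV (hd d)).
  move=> d /Hloc [z [ez H]].
  rewrite (md_split d z estar).
  case: H => [[az [mz rz]]|[[az [mz [rz rz']]]|[az [mz rz']]]].
  - case: (local3 az (esym ez)) => [->|[-> m1]]; first by rewrite subrr mz.
    by rewrite m1 mz.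
  - case: (local2 az (esym ez)) => [->|[[-> m1]|m1]]; first by rewrite subrr mz.
      by rewrite m1 mz.
    by rewrite m1 mz.
  - case: (local3 az (esym ez)) => [->|[-> m1]]; first by rewrite subrr mz.
    by rewrite m1 mz.
have clos : forall v, seg_vertex estar v -> RV v.
  move=> v /clos_rt_rtn1_iff H; elim: H => // y w [d [pd hd']] _ IH.
  have m0 := @points_md estar d 0 isT pd.
  case: hd' => [[ty hw]|[tw hy]].
    by rewrite -hw; apply: (claim d _).2; rewrite ?ty // m0.
  have := (claim (rv d) _).2; rewrite hd_rv tw; apply; first by rewrite -hdE hy.
  by rewrite md_rev m0.
move=> n pn /clos Rn.
have := (claim n Rn).1; by rewrite (@points_md estar n 3 isT pn).
Qed.

Lemma LS_recr d m : LS d m.+1 = LS d m + turn (iter m cs d) (iter m.+1 cs d).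
Proof. by rewrite /LS big_ord_recr. Qed.

Lemma phi_LS d i k : md (phi (iter (i + k) cs d) - phi (iter i cs d)) = md (LS d (i + k) - LS d i).
Proof.
suff H : (4 %| (phi (iter (i + k) cs d) - phi (iter i cs d)) + - (LS d (i + k) - LS d i))%Z.
  by rewrite (md_dvd H) opprK.
elim: k => [|k IH]; first by rewrite addn0 !subrr.
rewrite addnS LS_recr.
have T := phi_turn (a := iter (i + k) cs d) (b := iter (i + k).+1 cs d).
rewrite iterS tl_cs in T; have {}T := T erefl.
rewrite iterS.
have -> : phi (cs (iter (i + k) cs d)) - phi (iter i cs d) +
  - (LS d (i + k) + turn (iter (i + k) cs d) (cs (iter (i + k) cs d)) - LS d i) =
  (phi (iter (i + k) cs d) - phi (iter i cs d) + - (LS d (i + k) - LS d i)) -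
  (turn (iter (i + k) cs d) (cs (iter (i + k) cs d)) - (phi (cs (iter (i + k) cs d)) - phi (iter (i + k) cs d))) by ring.
by apply: rpredB.
Qed.

Theorem main_lemma (e0 : D) : onCo e0 -> ~~ is_face_of (fout G) (fcen G) ->
  forall x : int, LCo e0 <= x <= UCo e0 ->
  exists estar : D, onCo estar /\ lab estar e0 = x /\ points estar estar 0 /\
    (forall n, points estar n 3 -> ~ seg_vertex estar (tl n)).
Proof.
move=> hco hcf x hx.
set n := fingraph.order cs e0.
have ngt0 : (0 < n)%N := n_gt0 e0.
have [kM kMn LM] := Imax_att e0.
have [km kmn Lm] := Imin_att e0.
have Lge := Imax_ge hco hcf.
have Lle := Imin_le hco hcf.
have L0 := LS0 e0.
have step : forall k, LS e0 k.+1 - LS e0 k = (ang (iter k.+1 cs e0))%:Z - 2 := LS_step e0.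
have hdrt : forall k, hd (rt (iter k.+1 cs e0)) = tl (iter k cs e0).
  by move=> k; rewrite iterS rt_cs hd_rv.
have hdc : forall k, hd (iter k cs e0) = tl (iter k.+1 cs e0).
  by move=> k; rewrite iterS tl_cs.
case: (eqVneq (Imax e0) (Imin e0)) => [eq|neq].
-
  have z0 : Imin e0 = 0.
    have := Lge 0%N; have := Lle 0%N; rewrite L0 eq; lia.
  have allz : forall k, LS e0 k = 0.
    by move=> k; have := Lge k; have := Lle k; rewrite eq z0; lia.
  move: hx; rewrite /LCo /UCo eq eqxx /= z0 oppr0 => hx.
  have x0 : x = 0 by lia.
  exists e0; split => //; split; first by rewrite x0 /lab findex0 big_ord0.
  split; first exact: points_self.
  pose RV := [pred v | [exists t : 'I_n, tl (iter t cs e0) == v]].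
  have RVany : forall m, RV (tl (iter m cs e0)).
    move=> m; apply/existsP; exists (Ordinal (ltn_pmod m ngt0)).
    by rewrite /= -iter_mod.
  apply: (seg_lemma (RV := RV)); first by have := RVany 0%N.
  move=> a /existsP [t /eqP <-].
  exists (iter (t + n).-1.+1 cs e0); split.
    rewrite prednK ?addn_gt0 ?ngt0 ?orbT // iter_mod.
    by rewrite -{2}(add0n n) modnDr modn_small.
  right; left; split.
    have := step (t + n).-1; rewrite !allz; lia.
  split.
    have := phi_LS e0 0 (t + n).-1.+1; rewrite !allz add0n /= => ->.
    by rewrite subrr.
  by rewrite hdc hdrt; split; apply: RVany.
-
  move: hx; rewrite /LCo /UCo neq /= => hx.
  set y := - x.
  pose b := if (km < kM)%N then kM else (kM + n)%N.
  have ab : (km < b)%N by rewrite /b; case: ifP => //; lia.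
  have Lb : LS e0 b = Imax e0.
    rewrite /b; case: ifP => _ //.
    by rewrite -LM addnC -(mul1n n) (LS_period hco hcf).
  have st : forall k, -1 <= LS e0 k.+1 - LS e0 k <= 1.
    by move=> k; rewrite step; have := ang_rng (iter k.+1 cs e0); lia.
  have Imin_neq : Imin e0 < Imax e0.
    by rewrite lt_neqAle eq_sym neq /=; have := Lge 0%N; have := Lle 0%N; lia.
  have [i [j [[ai ij jb fi fj] mid]]] : exists i j,
      [/\ (km <= i)%N, (i.+1 < j)%N, (j <= b)%N, LS e0 i = (y - 1) & LS e0 j = (y + 1)]
      /\ forall t, (i < t < j)%N -> LS e0 t = y.
    apply: ivt => //; rewrite ?Lm ?Lb /y; lia.
  have Li1 : LS e0 i.+1 = y by apply: mid; rewrite leqnn ij.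
  exists (iter i.+1 cs e0); split; first exact: onCo_iter hco _.
  split; first by rewrite (lab_c hco hcf) Li1 /y opprK.
  split; first exact: points_self.
  pose RV := [pred v | [exists t : 'I_(j - i), tl (iter (i.+1 + t) cs e0) == v]].
  have RVidx : forall m, (i.+1 <= m <= j)%N -> RV (tl (iter m cs e0)).
    move=> m /andP [h1 h2]; apply/existsP.
    have ht : (m - i.+1 < j - i)%N by lia.
    by exists (Ordinal ht); rewrite (_ : (i.+1 + Ordinal ht)%N = m) //= subnKC.
  apply: (seg_lemma (RV := RV)).
    by apply: RVidx; rewrite leqnn; lia.
  move=> a /existsP [[t ht] /eqP <-] /=.
  exists (iter (i.+1 + t) cs e0); split => //.
  have md_k := phi_LS e0 i.+1 t.
  case: (posnP t) => [t0|tpos].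
    left; rewrite t0 addn0; split.
      have := step i; rewrite Li1 fi; lia.
    split; first by rewrite subrr.
    by rewrite hdc; apply: RVidx; lia.
  case: (eqVneq (i.+1 + t)%N j) => [ej|nej].
    right; right; split.
      rewrite ej; have := step j.-1; rewrite (prednK (leq_ltn_trans (leq0n _) ij)) fj.
      rewrite mid; first lia.
      lia.
    split.
      by rewrite md_k ej fj Li1 (_ : y + 1 - y = 1) //; ring.
    rewrite (_ : (i.+1 + t = (i + t).+1)%N) // hdrt; apply: RVidx; lia.
  right; left; split.
    have := step (i + t)%N; rewrite -addSn !mid; [lia|lia|lia].
  split.
    by rewrite md_k mid ?Li1 ?subrr //; lia.
  split; first by rewrite hdc; apply: RVidx; lia.
  rewrite (_ : (i.+1 + t = (i + t).+1)%N) // hdrt; apply: RVidx; lia.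
Qed.

End Phi.

End Graph.

End GraphPart.
Import GraphPart.

Unset Implicit Arguments.

Theorem lemma21 (G : orgraph) (e' : dart G) :
  valid_orgraph G ->
  ~~ is_face_of (fout G) (fcen G) ->
  onCo e' ->
  forall x : int, (LCo e' <= x <= UCo e')%R ->
  exists estar : dart G,
    onCo estar /\ lab estar e' = x /\
    points estar estar 0 /\
    (forall n : dart G, points estar n 3 -> ~ seg_vertex estar (tail n)).
Proof.
move=> HG hcf hco x hx.
have [g Hg] := exists_g HG.
exact: (@main_lemma G HG g Hg e' hco hcf x hx).
Qed.
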